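(* Let $R$ be a commutative Bezout domain. The following are equivalent: (1) $R$ has stable range 1.5; (2) for every $n\times m$ matrix $A$ over $R$ with $\operatorname{rank}A>1$ there is a row $u=(1,u_2,\dots,u_n)$ over $R$ such that $uA=(b_1,\dots,b_m)$ where $(b_1,\dots,b_m)$ equals (up to a unit) the greatest common divisor of all entries of $A$.
   Context: A commutative Bezout domain is a commutative integral domain with $1\ne0$ in which every finitely generated ideal is principal. $R$ has stable range 1.5 if for all $a,b\in R$ and $c\in R\setminus\{0\}$ with $(a,b,c)=1$ there is $r\in R$ with $(a+br,c)=1$. The rank of a matrix is the largest order of a nonzero minor. *)

(* Defs.v *)
From HB Require Import structures.
From mathcomp Require Import all_boot all_order all_algebra.
Set Implicit Arguments. Unset Strict Implicit. Unset Printing Implicit Defensive.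
Import GRing.Theory.
Local Open Scope ring_scope.

Section Defs.
Variable R : comNzRingType.

Definition dvd (a b : R) : Prop := exists c, b = c * a.

Definition in_ideal (s : seq R) (x : R) : Prop :=
  exists c : 'I_(size s) -> R, x = \sum_(i < size s) c i * s`_i.

Definition bezout_ring : Prop :=
  forall s : seq R, exists d : R,
    forall x, in_ideal s x <-> exists r, x = r * d.

Definition stable_range_1p5 : Prop :=
  forall a b c : R, c != 0 -> in_ideal [:: a; b; c] 1 ->
    exists r : R, in_ideal [:: a + b * r; c] 1.

Definition is_gcd (P : R -> Prop) (d : R) : Prop :=
  (forall x, P x -> dvd d x) /\
  (forall e, (forall x, P x -> dvd e x) -> dvd e d).

Definition entries n m (A : 'M[R]_(n, m)) (x : R) : Prop :=
  exists i j, x = A i j.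

Definition has_nonzero_minor n m (A : 'M[R]_(n, m)) (k : nat) : Prop :=
  exists (f : 'I_k -> 'I_n) (g : 'I_k -> 'I_m),
    injective f /\ injective g /\ \det (\matrix_(i, j) A (f i) (g j)) != 0.

Definition rank_gt1 n m (A : 'M[R]_(n, m)) : Prop :=
  exists k, (1 < k)%N /\ has_nonzero_minor A k.
End Defs.

(* Main.v *)
Require Import Defs.
From HB Require Import structures.
From mathcomp Require Import all_boot all_order all_algebra.
From mathcomp Require Import ring.
From Stdlib Require Import Classical.
Import GRing.Theory.
Set Implicit Arguments. Unset Strict Implicit.
Local Open Scope ring_scope.
Local Notation dvd := Defs.dvd.

Section Aux.
Variable R : idomainType.

Lemma dvd_refl (a : R) : dvd a a. Proof. by exists 1; rewrite mul1r. Qed.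
Lemma dvd0 (a : R) : dvd a 0. Proof. by exists 0; rewrite mul0r. Qed.
Lemma dvd_add (a b c : R) : dvd a b -> dvd a c -> dvd a (b + c).
Proof. by move=> [x ->] [y ->]; exists (x + y); rewrite mulrDl. Qed.
Lemma dvd_opp (a b : R) : dvd a b -> dvd a (- b).
Proof. by move=> [x ->]; exists (- x); rewrite mulNr. Qed.
Lemma dvd_sub (a b c : R) : dvd a b -> dvd a c -> dvd a (b - c).
Proof. by move=> H1 H2; apply: dvd_add => //; apply: dvd_opp. Qed.
Lemma dvd_mull (a b c : R) : dvd a b -> dvd a (c * b).
Proof. by move=> [x ->]; exists (c * x); rewrite mulrA. Qed.
Lemma dvd_trans (a b c : R) : dvd a b -> dvd b c -> dvd a c.
Proof. by move=> [x ->] [y ->]; exists (y * x); rewrite mulrA. Qed.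
Lemma dvd_sum (I : finType) (a : R) (F : I -> R) :
  (forall i, dvd a (F i)) -> dvd a (\sum_i F i).
Proof.
move=> H; apply: (big_ind (fun x => dvd a x)); first exact: dvd0.
  exact: dvd_add.
by move=> i _; apply: H.
Qed.

Lemma in_ideal2P (a b x : R) :
  in_ideal [:: a; b] x <-> exists l m, x = l * a + m * b.
Proof.
split.
  by move=> [c ->]; exists (c ord0), (c (lift ord0 ord0));
     rewrite !big_ord_recl big_ord0 addr0.
move=> [l [m ->]]; exists (fun i : 'I_2 => nth 0 [:: l; m] i).
by rewrite !big_ord_recl big_ord0 addr0.
Qed.

Lemma in_ideal3P (a b c x : R) :
  in_ideal [:: a; b; c] x <-> exists l m k, x = l * a + m * b + k * c.
Proof.
split.
  move=> [f ->]; exists (f ord0), (f (lift ord0 ord0)),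
     (f (lift ord0 (lift ord0 ord0))).
  by rewrite !big_ord_recl big_ord0 addr0 addrA.
move=> [l [m [k ->]]]; exists (fun i : 'I_3 => nth 0 [:: l; m; k] i).
by rewrite !big_ord_recl big_ord0 addr0 addrA.
Qed.

Hypothesis HB : bezout_ring R.

Lemma bez2 (a b : R) : exists l m, dvd (l * a + m * b) a /\ dvd (l * a + m * b) b.
Proof.
have [d Hd] := HB [:: a; b].
have [l [m E]] : exists l m, d = l * a + m * b.
  by apply/in_ideal2P; apply/Hd; exists 1; rewrite mul1r.
exists l, m; rewrite -E; split.
  have [r ->] : exists r, a = r * d.
    by apply/Hd/in_ideal2P; exists 1, 0; rewrite mul1r mul0r addr0.
  by exists r.
have [r ->] : exists r, b = r * d.
  by apply/Hd/in_ideal2P; exists 0, 1; rewrite mul1r mul0r add0r.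
by exists r.
Qed.

Definition dot m (v : 'rV[R]_m) (w : 'cV[R]_m) : R := (v *m w) 0 0.
Definition Ivec m (v : 'rV[R]_m) (t : R) : Prop := exists w, t = dot v w.
Definition Divv m (d : R) (v : 'rV[R]_m) : Prop := forall j, dvd d (v 0 j).

Lemma dotDl m (x y : 'rV[R]_m) w : dot (x + y) w = dot x w + dot y w.
Proof. by rewrite /dot mulmxDl mxE. Qed.
Lemma dotDr m (x : 'rV[R]_m) w w' : dot x (w + w') = dot x w + dot x w'.
Proof. by rewrite /dot mulmxDr mxE. Qed.
Lemma dotZl m (x : 'rV[R]_m) a w : dot (a *: x) w = a * dot x w.
Proof. by rewrite /dot -scalemxAl mxE. Qed.
Lemma dotZr m (x : 'rV[R]_m) a w : dot x (a *: w) = a * dot x w.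
Proof. by rewrite /dot -scalemxAr mxE. Qed.
Lemma dotNl m (x : 'rV[R]_m) w : dot (- x) w = - dot x w.
Proof. by rewrite /dot mulNmx mxE. Qed.
Lemma dot0l m (w : 'cV[R]_m) : dot 0 w = 0.
Proof. by rewrite /dot mul0mx mxE. Qed.
Lemma dot_delta m (x : 'rV[R]_m) j : dot x (delta_mx j 0) = x 0 j.
Proof. by rewrite /dot -colE mxE. Qed.

Lemma Divv_dot m d (v : 'rV[R]_m) w : Divv d v -> dvd d (dot v w).
Proof.
move=> H; rewrite /dot mxE; apply: dvd_sum => j.
by rewrite mulrC; apply: dvd_mull.
Qed.

Lemma genv m (v : 'rV[R]_m) : exists w, Divv (dot v w) v.
Proof.
elim: m v => [|m IH] v.
  by exists 0 => [[]].
pose v' : 'rV[R]_m := \row_j v 0 (lift ord0 j).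
have [w' Hw'] := IH v'.
have [l [k [H1 H2]]] := bez2 (v 0 ord0) (dot v' w').
pose w : 'cV[R]_m.+1 := \col_i (match unlift ord0 i with Some j => k * w' j 0 | None => l end).
have Ew : dot v w = l * v 0 ord0 + k * dot v' w'.
  rewrite /dot !mxE big_ord_recl !mxE unlift_none mulrC; congr (_ + _).
  rewrite mulr_sumr; apply: eq_bigr => j _.
  by rewrite /w /v' !mxE liftK mulrCA.
exists w; rewrite Ew => j.
case: (unliftP ord0 j) => [j'|] ->; last by [].
apply: dvd_trans H2 _.
have := Hw' j'; by rewrite mxE.
Qed.

Lemma Divv_Ivec m d (v : 'rV[R]_m) t : Divv d v -> Ivec v t -> dvd d t.
Proof. by move=> H [w ->]; apply: Divv_dot. Qed.

Lemma Divv_lin m d (x y : 'rV[R]_m) a b :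
  Divv d x -> Divv d y -> Divv d (a *: x + b *: y).
Proof.
move=> Hx Hy j; rewrite !mxE.
by apply: dvd_add; apply: dvd_mull.
Qed.


Definition dep m (x y : 'rV[R]_m) : Prop :=
  exists a b, (a != 0 \/ b != 0) /\ a *: x + b *: y = 0.

Hypothesis SR : stable_range_1p5 R.

Lemma pairP m (x z : 'rV[R]_m) : ~ dep x z ->
  exists r d, Ivec (x + r *: z) d /\ Divv d x /\ Divv d z.
Proof.
move=> Hind.
have [w0 Hg] := genv z.
move: Hg; set g := dot z w0 => Hg.
have gnz : g != 0.
  apply/negP => /eqP g0; apply: Hind; exists 0, 1; split; first by right; exact: oner_neq0.
  rewrite scale0r add0r scale1r; apply/rowP => j; rewrite mxE.
  by have := Hg j; rewrite g0 => -[e ->]; rewrite mulr0.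
have [qf Hq] := fin_all_exists Hg.
pose q : 'rV[R]_m := \row_j qf j.
have Ez : z = g *: q by apply/rowP => j; rewrite !mxE Hq mulrC.
have Hgq : g * dot q w0 = g by rewrite -dotZl -Ez.
move: Hgq; set a := dot x w0 => Hgq.
pose b := x - a *: q.
have [bet Hc] := genv b.
move: Hc; set c := dot b bet => Hc.
have Ec : c = dot x bet - a * dot q bet.
  by rewrite /c /b dotDl dotNl dotZl.
have cnz : c != 0.
  apply/negP => /eqP c0; apply: Hind; exists g, (-a); split; first by left.
  have Eb : b = 0.
    by apply/rowP => j; have := Hc j; rewrite c0 => -[e ->]; rewrite mxE mulr0.
  have Ex : x = a *: q by apply/eqP; rewrite -subr_eq0; apply/eqP; exact: Eb.
  rewrite Ex Ez !scalerA -scalerDl.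
  have -> : g * a + - a * g = 0 by ring.
  by rewrite scale0r.
have [l1 [m1 [Hh1 Hh2]]] := bez2 a g.
move: Hh1 Hh2; set h := l1 * a + m1 * g => Hh1 Hh2.
have [l2 [m2 [Hd1 Hd2]]] := bez2 h c.
move: Hd1 Hd2; set d := l2 * h + m2 * c => Hd1 Hd2.
have [a' Ea] : dvd d a by apply: dvd_trans Hd1 Hh1.
have [g' Eg] : dvd d g by apply: dvd_trans Hd1 Hh2.
have [c' Ec'] := Hd2.
have dnz : d != 0.
  by apply/negP => /eqP d0; move: gnz; rewrite Eg d0 mulr0 eqxx.
have c'nz : c' != 0.
  by apply/negP => /eqP c0; move: cnz; rewrite Ec' c0 mul0r eqxx.
have E1 : 1 = (l2 * l1) * a' + (l2 * m1) * g' + m2 * c'.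
  apply: (mulIf dnz); rewrite mul1r {1}/d /h.
  rewrite [in LHS]Ea [in LHS]Eg [in LHS]Ec'; ring.
have [r Hr] := @SR a' g' c' c'nz (proj2 (in_ideal3P _ _ _ _) (ex_intro _ _ (ex_intro _ _ (ex_intro _ _ E1)))).
have [l [mm Elm]] := proj1 (in_ideal2P _ _ _) Hr.
have Fd : d = l * (a + g * r) + mm * c.
  rewrite -[LHS]mul1r Elm Ea Eg Ec'; ring.
exists r, d; split; last split.
- exists (l *: w0 + mm *: (bet + (- dot q bet) *: w0)).
  rewrite Fd Ec Ez !(dotDl, dotDr, dotZl, dotZr) -/a.
  have -> : dot q w0 = 1.
    by apply: (mulfI gnz); rewrite Hgq mulr1.
  ring.
- move=> j.
  have -> : x 0 j = b 0 j + a * q 0 j by rewrite /b !mxE subrK.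
  apply: dvd_add; first exact: (dvd_trans Hd2 (Hc j)).
  by rewrite mulrC; apply: dvd_mull; exact: (dvd_trans Hd1 Hh1).
- move=> j; rewrite Hq; apply: dvd_mull.
  exact: (dvd_trans Hd1 Hh2).
Qed.


Lemma rowv_eq0 m (v : 'rV[R]_m) : (forall j, v 0 j = 0) -> v = 0.
Proof. by move=> H; apply/rowP => j; rewrite H mxE. Qed.

Lemma entry0 m (v : 'rV[R]_m) j : v = 0 -> v 0 j = 0.
Proof. by move=> ->; rewrite mxE. Qed.

Lemma dep_entry m (x y : 'rV[R]_m) a b :
  a *: x + b *: y = 0 -> forall j, a * x 0 j + b * y 0 j = 0.
Proof. by move=> E j; have := entry0 j E; rewrite !mxE. Qed.

Lemma dep_nz m (p z : 'rV[R]_m) : z != 0 -> dep p z ->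
  exists a b, a != 0 /\ forall j, a * p 0 j + b * z 0 j = 0.
Proof.
move=> znz [a [b [Hab E]]].
have Ej := dep_entry E.
case: (eqVneq a 0) => [a0|anz]; last by exists a, b.
exfalso; move: Hab; rewrite a0 eqxx => -[//|bnz].
move/negP: znz; apply; apply/eqP; apply: rowv_eq0 => j.
have := Ej j; rewrite a0 mul0r add0r => /eqP; rewrite mulf_eq0 (negbTE bnz) /=.
by move/eqP.
Qed.

Lemma dep_trans m (z p q : 'rV[R]_m) : z != 0 -> dep p z -> dep q z -> dep p q.
Proof.
move=> znz Hp Hq.
have [a [b [anz Ep]]] := dep_nz znz Hp.
have [c [d [cnz Eq]]] := dep_nz znz Hq.
case: (eqVneq d 0) => [d0|dnz].
  exists 0, 1; split; first by right; exact: oner_neq0.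
  rewrite scale0r add0r scale1r; apply: rowv_eq0 => j.
  have := Eq j; rewrite d0 mul0r addr0 => /eqP; rewrite mulf_eq0 (negbTE cnz) /=.
  by move/eqP.
exists (d * a), (- (b * c)); split; first by left; rewrite mulf_neq0.
apply: rowv_eq0 => j; rewrite !mxE.
have -> : d * a * p 0 j + - (b * c) * q 0 j =
  d * (a * p 0 j + b * z 0 j) - b * (c * q 0 j + d * z 0 j) by ring.
by rewrite Ep Eq !mulr0 subrr.
Qed.

Lemma dep_add m (x y z : 'rV[R]_m) : z != 0 -> dep x z -> ~ dep y z ->
  ~ dep (x + y) z.
Proof.
move=> znz Hx Hy Hxy; apply: Hy.
have [a [b [anz Ex]]] := dep_nz znz Hx.
have [c [d [cnz Exy]]] := dep_nz znz Hxy.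
exists (a * c), (a * d - c * b); split; first by left; rewrite mulf_neq0.
apply: rowv_eq0 => j; rewrite !mxE.
have := Exy j; rewrite mxE => E2.
have -> : a * c * y 0 j + (a * d - c * b) * z 0 j =
  a * (c * (x 0 j + y 0 j) + d * z 0 j) - c * (a * x 0 j + b * z 0 j) by ring.
by rewrite E2 Ex !mulr0 subrr.
Qed.

Lemma dep_refl m (x : 'rV[R]_m) : dep x x.
Proof.
exists 1, (-1); split; first by left; exact: oner_neq0.
by rewrite scale1r scaleN1r subrr.
Qed.

Lemma dep0l m (x y : 'rV[R]_m) : x = 0 -> dep x y.
Proof.
move=> ->; exists 1, 0; split; first by left; exact: oner_neq0.
by rewrite scaler0 scale0r addr0.
Qed.

Lemma dep0r m (x y : 'rV[R]_m) : y = 0 -> dep x y.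
Proof.
move=> ->; exists 0, 1; split; first by right; exact: oner_neq0.
by rewrite scaler0 scale0r addr0.
Qed.

Lemma pairH m (y y' : 'rV[R]_m) :
  exists l mu d, Ivec (l *: y + mu *: y') d /\ Divv d y /\ Divv d y'.
Proof.
case: (classic (dep y y')) => Hd; last first.
  have [r [d [H1 [H2 H3]]]] := pairP Hd.
  by exists 1, r, d; rewrite scale1r.
have [a [b [Hab E]]] := Hd.
have Ej := dep_entry E.
have [s [t [Hh1 Hh2]]] := bez2 a b.
move: Hh1 Hh2; set h := s * a + t * b => Hh1 Hh2.
have [a' Ea] := Hh1; have [b' Eb] := Hh2.
have hnz : h != 0.
  apply/negP => /eqP h0; move: Hab; rewrite Ea Eb h0 !mulr0 eqxx.
  by case.
have E1 : 1 = s * a' + t * b'.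
  by apply: (mulIf hnz); rewrite mul1r {1}/h [in LHS]Ea [in LHS]Eb; ring.
have key : forall j, a' * y 0 j + b' * y' 0 j = 0.
  move=> j; apply: (mulIf hnz); rewrite mul0r.
  have := Ej j; rewrite Ea Eb => <-.
  ring.
pose p := t *: y + (- s) *: y'.
have [w Hw] := genv p.
exists t, (- s), (dot p w); split; first by exists w.
split => j.
  have -> : y 0 j = b' * p 0 j.
    rewrite /p !mxE; apply/eqP; rewrite -subr_eq0.
    have -> : y 0 j - b' * (t * y 0 j + - s * y' 0 j) =
      (1 - (s * a' + t * b')) * y 0 j + s * (a' * y 0 j + b' * y' 0 j) by ring.
    by rewrite key -E1 subrr mul0r mulr0 addr0.
  exact: dvd_mull (Hw j).
have -> : y' 0 j = (- a') * p 0 j.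
  rewrite /p !mxE; apply/eqP; rewrite -subr_eq0.
  have -> : y' 0 j - (- a') * (t * y 0 j + - s * y' 0 j) =
    (1 - (s * a' + t * b')) * y' 0 j + t * (a' * y 0 j + b' * y' 0 j) by ring.
  by rewrite key -E1 subrr mul0r mulr0 addr0.
exact: dvd_mull (Hw j).
Qed.


Lemma Hlem n m (A : 'M[R]_(n, m)) k : (k <= n)%N ->
  exists s : 'rV[R]_n,
    (forall i : 'I_n, ((i : nat) == 0%N) || (k <= i)%N -> s 0 i = 0) /\
    exists d, Ivec (s *m A) d /\
      forall i : 'I_n, (0 < i < k)%N -> Divv d (row i A).
Proof.
elim: k => [|k IH] hk.
  exists 0; split; first by move=> i _; rewrite mxE.
  exists 0; split; first by exists 0; rewrite mul0mx dot0l.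
  by move=> i; rewrite ltn0 andbF.
have [s [Hs [d [Hd Hdiv]]]] := IH (ltnW hk).
case: (eqVneq k 0%N) => [k0|knz].
  exists s; split.
    by move=> i Hi; apply: Hs; rewrite k0 leq0n orbT.
  exists d; split => // i; rewrite k0 => /andP [H1 H2].
  by move: H1; rewrite lt0n; move: H2; rewrite ltnS leqn0 => ->.
pose ik : 'I_n := Ordinal hk.
have [l [mu [d' [Hd' [H1 H2]]]]] := pairH (s *m A) (row ik A).
exists (l *: s + mu *: delta_mx 0 ik); split.
  move=> i Hi; rewrite !mxE Hs; last first.
    by case/orP: Hi => [->//|Hi]; rewrite (ltnW Hi) orbT.
  have -> : (i == ik) = false.
    apply/negP => /eqP Ei; move: Hi; rewrite Ei /= ltnn orbF.
    by move/eqP => k0; rewrite k0 eqxx in knz.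
  by rewrite andbF mulr0 mulr0 addr0.
exists d'; split.
  by move: Hd'; rewrite mulmxDl -!scalemxAl -rowE.
move=> i /andP [Hi1 Hi2].
case: (eqVneq (i : nat) k) => [Eik|Nik].
  by have -> : i = ik by apply: val_inj.
have Hik : (0 < i < k)%N by rewrite Hi1 ltn_neqAle Nik -ltnS.
move=> j; apply: dvd_trans (Hdiv i Hik j).
by apply: Divv_Ivec H1 Hd.
Qed.

Lemma scalev_eq0 p q (a : R) (v : 'M[R]_(p, q)) : a *: v = 0 -> a = 0 \/ v = 0.
Proof.
move=> E; case: (eqVneq a 0) => [->|anz]; [by left|right].
apply/matrixP => i j; have := congr1 (fun M : 'M_(p, q) => M i j) E.
rewrite !mxE => /eqP; rewrite mulf_eq0 (negbTE anz) /=.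
by move/eqP.
Qed.

Lemma rank_indep n m (A : 'M[R]_(n, m)) : rank_gt1 A ->
  exists i j, ~ dep (row i A) (row j A).
Proof.
move=> [k [hk [f [g [_ [_ Hdet]]]]]].
apply: NNPP => Hn.
have Hall : forall i j, dep (row i A) (row j A).
  move=> i j; apply: NNPP => Hij; apply: Hn; by exists i, j.
move: f g hk Hdet; case: k => [|[|k]] f g // _ Hdet.
set M := \matrix_(i, j) A (f i) (g j) in Hdet.
pose i0 : 'I_k.+2 := ord0.
pose i1 : 'I_k.+2 := lift ord0 ord0.
have [a [b [Hab E]]] := Hall (f i0) (f i1).
have Ej := dep_entry E.
pose v : 'rV[R]_k.+2 := a *: delta_mx 0 i0 + b *: delta_mx 0 i1.
have Hv : v *m M = 0.
  rewrite /v mulmxDl -!scalemxAl -!rowE.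
  apply: rowv_eq0 => j; rewrite !mxE.
  by have := Ej (g j); rewrite !mxE.
have : v *m M *m \adj M = 0 by rewrite Hv mul0mx.
rewrite -mulmxA mul_mx_adj mul_mx_scalar => /scalev_eq0 [H0|H0].
  by move/negP: Hdet; rewrite H0 eqxx.
move: Hab => [anz|bnz].
  have := entry0 i0 H0; rewrite /v !mxE /= mulr1 mulr0 addr0.
  by move/eqP; rewrite (negbTE anz).
have := entry0 i1 H0; rewrite /v !mxE /= mulr1 mulr0 add0r.
by move/eqP; rewrite (negbTE bnz).
Qed.


Lemma main n m (A : 'M[R]_(n, m)) : rank_gt1 A ->
  exists u : 'rV[R]_n, (forall i : 'I_n, nat_of_ord i = 0%N -> u 0 i = 1) /\
    exists d, Ivec (u *m A) d /\ forall i j, dvd d (A i j).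
Proof.
move=> HA.
have [i0 [j0 Hij]] := rank_indep HA.
have n0 : (0 < n)%N by apply: leq_ltn_trans (ltn_ord i0).
pose o : 'I_n := Ordinal n0.
have [s [Hs0 [dz [Hz Hdz]]]] := Hlem A (leqnn n).
have Hs : s 0 o = 0 by apply: Hs0; rewrite eqxx.
pose z := s *m A.
pose x := row o A.
have Hrow0 : forall i : 'I_n, (i : nat) != 0%N -> Divv dz (row i A).
  by move=> i Hi; apply: Hdz; rewrite lt0n Hi ltn_ord.
have znz : z != 0.
  apply/negP => /eqP z0.
  have dz0 : dz = 0 by move: Hz; rewrite -/z z0 => -[w ->]; rewrite dot0l.
  have Hr : forall i : 'I_n, (i : nat) != 0%N -> row i A = 0.
    move=> i Hi; apply: rowv_eq0 => j.
    by have := Hrow0 i Hi j; rewrite dz0 => -[e ->]; rewrite mulr0.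
  apply: Hij.
  case: (eqVneq (i0 : nat) 0%N) => [Ei|Ni]; last by apply: dep0l; apply: Hr.
  case: (eqVneq (j0 : nat) 0%N) => [Ej|Nj]; last by apply: dep0r; apply: Hr.
  have -> : i0 = j0 by apply: val_inj; rewrite /= Ei Ej.
  exact: dep_refl.
have [t [Ht0 Ht]] : exists t : 'rV[R]_n, t 0 o = 0 /\ ~ dep (x + t *m A) z.
  case: (classic (dep x z)) => Hxz; last first.
    by exists 0; rewrite mxE mul0mx addr0.
  have [i Hi] : exists i, ~ dep (row i A) z.
    apply: NNPP => Hn; apply: Hij; apply: (dep_trans znz).
      by apply: NNPP => H; apply: Hn; exists i0.
    by apply: NNPP => H; apply: Hn; exists j0.
  have Nio : (i : nat) != 0%N.
    apply/negP => /eqP Eio; apply: Hi.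
    by have -> : i = o by apply: val_inj.
  exists (delta_mx 0 i); split.
    rewrite mxE eqxx /=; case: eqP => // Eoi.
    by move: Nio; rewrite -Eoi eqxx.
  by rewrite -rowE; apply: dep_add.
have [r [d [Hd [Dx Dz]]]] := pairP Ht.
exists (delta_mx 0 o + t + r *: s); split.
  move=> i Hi; have -> : i = o by apply: val_inj.
  by rewrite !mxE Ht0 Hs eqxx mulr0 !addr0.
exists d; split.
  by rewrite !mulmxDl -rowE -scalemxAl.
have Ddz : dvd d dz by apply: Divv_Ivec Dz Hz.
have Hrest : forall i : 'I_n, (i : nat) != 0%N -> forall j, dvd d (A i j).
  move=> i Hi j; apply: dvd_trans Ddz _.
  by have := Hrow0 i Hi j; rewrite mxE.
move=> i j; case: (eqVneq (i : nat) 0%N) => [Ei|Ni]; last exact: Hrest.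
have -> : i = o by apply: val_inj.
have -> : A o j = (x + t *m A) 0 j - (t *m A) 0 j by rewrite mxE addrK mxE.
apply: dvd_sub; first exact: Dx.
rewrite mxE; apply: dvd_sum => k.
case: (eqVneq (k : nat) 0%N) => [Ek|Nk].
  have -> : k = o by apply: val_inj.
  by rewrite Ht0 mul0r; apply: dvd0.
by apply: dvd_mull; apply: Hrest.
Qed.

End Aux.

Theorem theorem2p21 (R : idomainType) (HB : bezout_ring R) :
  stable_range_1p5 R <->
  (forall (n m : nat) (A : 'M[R]_(n, m)), rank_gt1 A ->
     exists u : 'rV[R]_n,
       (forall i : 'I_n, nat_of_ord i = 0%N -> u 0 i = 1) /\
       exists d : R, is_gcd (entries A) d /\ is_gcd (entries (u *m A)) d).
Proof.
split.
  move=> SR n m A HA.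
  have [u [Hu [d [Hd Hdiv]]]] := main HB SR HA.
  have Dall : forall e, (forall i j, dvd e (A i j)) -> Divv e (u *m A).
    move=> e He j; rewrite mxE; apply: dvd_sum => k.
    by apply: dvd_mull; apply: He.
  exists u; split => //; exists d; split; split.
  - by move=> _ [i [j ->]]; apply: Hdiv.
  - move=> e He; apply: Divv_Ivec _ Hd; apply: Dall => i j.
    by apply: He; exists i, j.
  - by move=> _ [i [j ->]]; rewrite (ord1 i); apply: Dall.
  - move=> e He; apply: Divv_Ivec _ Hd => j.
    by apply: He; exists 0, j.
move=> H a b c cnz Habc.
have [l [mu [k E1]]] := proj1 (in_ideal3P _ _ _ _) Habc.
case: (eqVneq b 0) => [b0|bnz].
  exists 0; apply/in_ideal2P; exists l, k.
  by rewrite E1 b0 !mulr0 !addr0.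
pose A : 'M[R]_(2, 2) := \matrix_(i, j)
  if i == 0 then (if j == 0 then a else c) else (if j == 0 then b else 0).
have HA : rank_gt1 A.
  exists 2%N; split => //; exists id, id; split => //; split => //.
  rewrite (expand_det_row _ ord0) !big_ord_recl big_ord0 /cofactor !det_mx11 !mxE /=.
  have -> : (-1) ^+ (0 + bump 0 0) = -1 :> R by rewrite /bump /= expr1.
  by rewrite !mulr0 add0r addr0 mulN1r mulrN oppr_eq0 mulf_neq0.
have [u [Hu [d [Hd1 Hd2]]]] := H 2%N 2%N A HA.
have u0 : u 0 0 = 1 by apply: Hu.
exists (u 0 1).
have E0 : (u *m A) 0 0 = a + b * u 0 1.
  have L1 : lift ord0 ord0 = 1 :> 'I_2 by apply: val_inj.
  rewrite mxE !big_ord_recl big_ord0 !mxE /= u0 L1 mul1r addr0 mulrC //.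
have E1' : (u *m A) 0 1 = c.
  have L1 : lift ord0 ord0 = 1 :> 'I_2 by apply: val_inj.
  by rewrite mxE !big_ord_recl big_ord0 !mxE /= u0 L1 mul1r mulr0 !addr0.
have [l2 [m2 [Hh1 Hh2]]] := bez2 HB (a + b * u 0 1) c.
move: Hh1 Hh2; set h := l2 * (a + b * u 0 1) + m2 * c => Hh1 Hh2.
have Hhd : dvd h d.
  apply: (proj2 Hd2) => _ [i [j ->]]; rewrite (ord1 i).
  case: j => [[|[|jj]] Hj] //.
    have -> : Ordinal Hj = 0 by apply: val_inj.
    by rewrite E0.
  have -> : Ordinal Hj = 1 by apply: val_inj.
  by rewrite E1'.
have Hd1' : dvd d 1.
  have Da : dvd d a by apply: (proj1 Hd1); exists 0, 0; rewrite /A mxE.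
  have Db : dvd d b by apply: (proj1 Hd1); exists 1, 0; rewrite /A mxE.
  have Dc : dvd d c by apply: (proj1 Hd1); exists 0, 1; rewrite /A mxE.
  by rewrite E1; apply: dvd_add; [apply: dvd_add|]; apply: dvd_mull.
have [e He] := dvd_trans Hhd Hd1'.
apply/in_ideal2P; exists (e * l2), (e * m2).
by rewrite He /h; ring.
Qed.
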